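(* $$F^{1;2;2}_{1;1;1}\left[\left.\begin{matrix}2\\ \tfrac52\end{matrix};\begin{matrix}1,1\\ 2\end{matrix};\begin{matrix}\tfrac12,\tfrac12\\ 1\end{matrix}\right|1,1\right]=3\pi\log 2.$$
   Context: $(a)_n=\Gamma(a+n)/\Gamma(a)$. The Kampé de Fériet function is $$F^{A;B;B'}_{C;D;D'}\left[\left.\begin{matrix}a_1,\dots,a_A\\ c_1,\dots,c_C\end{matrix};\begin{matrix}b_1,\dots,b_B\\ d_1,\dots,d_D\end{matrix};\begin{matrix}b'_1,\dots,b'_{B'}\\ d'_1,\dots,d'_{D'}\end{matrix}\right|x,y\right]=\sum_{m,n\ge0}\frac{\prod_i(a_i)_{m+n}\prod_i(b_i)_m\prod_i(b'_i)_n}{\prod_i(c_i)_{m+n}\prod_i(d_i)_m\prod_i(d'_i)_n}\frac{x^my^n}{m!\,n!}.$$ *)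

(* Defs.v *)
From Stdlib Require Import Reals Arith.
Open Scope R_scope.

Fixpoint poch (a : R) (n : nat) : R :=
  match n with
  | O => 1
  | S k => poch a k * (a + INR k)
  end.

(* General term of F^{1;2;2}_{1;1;1}[2 / 5/2 ; 1,1 / 2 ; 1/2,1/2 / 1 | x, y]. *)
Definition kdf_term (x y : R) (m n : nat) : R :=
  (poch 2 (m + n) * (poch 1 m * poch 1 m) * (poch (1/2) n * poch (1/2) n))
  / (poch (5/2) (m + n) * poch 2 m * poch 1 n)
  * (x ^ m * y ^ n) / (INR (fact m) * INR (fact n)).

(* Double series summed along the diagonals m + n = k (the terms at x = y = 1
   are nonnegative, so this equals the sum in any order). *)
Definition kdf_diag (x y : R) (k : nat) : R :=
  sum_f_R0 (fun m => kdf_term x y m (k - m)%nat) k.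

(* Main.v *)
Require Import Defs.
From Stdlib Require Import Reals Arith ZArith Lra Lia Psatz.
From Coquelicot Require Import Coquelicot.
Open Scope R_scope.

Fixpoint cc (n:nat) : R := match n with O => 1 | S k => cc k * (2*INR k+1)/(2*INR k+2) end.
Fixpoint hm (n:nat) : R := match n with O => 0 | S k => hm k + /(2*INR k+1) end.
Definition cb n := cc n / (2*INR n+1).
Definition qq n := cc n * hm n.
Definition bb n := cc n * hm (S n) / (2*INR n + 1).

Lemma cc_pos n : 0 < cc n.
Proof. induction n; simpl. lra. pose proof (pos_INR n).
apply Rmult_lt_0_compat. apply Rmult_lt_0_compat; lra. apply Rinv_0_lt_compat; lra. Qed.

Lemma cc_le1 n : cc n <= 1.
Proof. induction n; simpl. lra. pose proof (pos_INR n). pose proof (cc_pos n).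
unfold Rdiv. rewrite Rmult_assoc.
assert ((2 * INR n + 1) * / (2 * INR n + 2) <= 1).
{ apply (Rmult_le_reg_r (2 * INR n + 2)). lra. rewrite Rmult_assoc, Rinv_l; lra. }
assert (0 <= (2 * INR n + 1) * / (2 * INR n + 2)).
{ apply Rmult_le_pos. lra. left; apply Rinv_0_lt_compat; lra. }
nra. Qed.

Lemma hm_nonneg n : 0 <= hm n.
Proof. induction n; simpl. lra. pose proof (pos_INR n).
assert (0 < / (2 * INR n + 1)) by (apply Rinv_0_lt_compat; lra). lra. Qed.

Lemma hm_le n : hm n <= INR n.
Proof. induction n; cbn [hm]. simpl; lra. rewrite S_INR. pose proof (pos_INR n).
assert (/ (2 * INR n + 1) <= 1).
{ rewrite <- Rinv_1. apply Rinv_le_contravar; lra. } lra. Qed.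

Lemma CV_radius_cmp a b : (forall n, Rabs (b n) <= Rabs (a n)) ->
  Rbar_le (CV_radius a) (CV_radius b).
Proof.
intros H.
destruct (CV_radius_bounded a) as [_ Ha].
destruct (CV_radius_bounded b) as [Hb _].
apply Ha. intros r [M HM]. apply Hb. exists M. intros n.
eapply Rle_trans; [|apply (HM n)].
rewrite !Rabs_mult. apply Rmult_le_compat_r. apply Rabs_pos. apply H.
Qed.

Lemma radius_ge1 a : (forall n, Rabs (a n) <= INR n + 1) -> Rbar_le 1 (CV_radius a).
Proof.
intros H.
assert (Hc : CV_radius (fun _ : nat => 1) = / 1).
{ apply CV_radius_finite_DAlembert. intros; lra. lra.
  eapply is_lim_seq_ext. 2: apply is_lim_seq_const. intros n; simpl.
  rewrite Rdiv_1_r, Rabs_R1. reflexivity. }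
rewrite Rinv_1 in Hc.
assert (Hd : CV_radius (PS_derive (fun _ : nat => 1)) = 1).
{ rewrite CV_radius_derive. exact Hc. }
rewrite <- Hd. apply CV_radius_cmp. intros n. unfold PS_derive.
rewrite Rmult_1_r, S_INR. rewrite (Rabs_right (INR n + 1)). apply H.
pose proof (pos_INR n). lra.
Qed.

Lemma inside1 a x : Rbar_le 1 (CV_radius a) -> Rabs x < 1 -> Rbar_lt (Rabs x) (CV_radius a).
Proof. intros H1 H2. eapply Rbar_lt_le_trans. 2: exact H1. simpl. exact H2. Qed.

Lemma ex_ps a y : (forall n, Rabs (a n) <= INR n + 1) -> Rabs y < 1 -> ex_pseries a y.
Proof. intros H Hy. apply CV_radius_inside. apply inside1; auto. apply radius_ge1; auto. Qed.

Lemma PS_lin u v y al be : ex_pseries u y -> ex_pseries v y ->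
  PSeries (fun n => al * u n + be * v n) y = al * PSeries u y + be * PSeries v y.
Proof.
intros Hu Hv.
rewrite <- (PSeries_scal al u), <- (PSeries_scal be v).
rewrite <- PSeries_plus.
- apply PSeries_ext. intros n. reflexivity.
- apply ex_pseries_scal. apply Rmult_comm. exact Hu.
- apply ex_pseries_scal. apply Rmult_comm. exact Hv.
Qed.

Lemma L_yd a y : y * PSeries (PS_derive a) y = PSeries (fun n => INR n * a n) y.
Proof.
rewrite <- PSeries_incr_1. apply PSeries_ext. intros [|n]; unfold PS_incr_1, PS_derive; simpl.
- rewrite Rmult_0_l. reflexivity.
- reflexivity.
Qed.

Lemma cc_S n : cc (S n) = cc n * (2*INR n+1)/(2*INR n+2).
Proof. reflexivity. Qed.
Lemma hm_S n : hm (S n) = hm n + /(2*INR n+1).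
Proof. reflexivity. Qed.

Lemma dcc n : PS_derive cc n = INR n * cc n + /2 * cc n.
Proof. unfold PS_derive. rewrite cc_S, S_INR. pose proof (pos_INR n). field. lra. Qed.

Lemma dqq n : PS_derive qq n = INR n * qq n + /2 * qq n + /2 * cc n.
Proof. unfold PS_derive, qq. rewrite cc_S, hm_S, S_INR. pose proof (pos_INR n). field. lra. Qed.

Lemma bcb n : cb n + 2 * (INR n * cb n) = cc n.
Proof. unfold cb. pose proof (pos_INR n). field. lra. Qed.

Lemma bbb n : bb n + 2 * (INR n * bb n) = qq n + cb n.
Proof. unfold bb, qq, cb. rewrite hm_S. pose proof (pos_INR n). field. lra. Qed.

Lemma bnd_cc n : Rabs (cc n) <= INR n + 1.
Proof. pose proof (cc_pos n). pose proof (cc_le1 n). pose proof (pos_INR n).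
rewrite Rabs_right; lra. Qed.

Lemma inv21 n : 0 < / (2*INR n+1) <= 1.
Proof. pose proof (pos_INR n). split. apply Rinv_0_lt_compat; lra.
rewrite <- Rinv_1. apply Rinv_le_contravar; lra. Qed.

Lemma bnd_cb n : Rabs (cb n) <= INR n + 1.
Proof. unfold cb. pose proof (cc_pos n). pose proof (cc_le1 n). pose proof (pos_INR n).
pose proof (inv21 n). unfold Rdiv. rewrite Rabs_right; nra. Qed.

Lemma bnd_qq n : Rabs (qq n) <= INR n + 1.
Proof. unfold qq. pose proof (cc_pos n). pose proof (cc_le1 n). pose proof (pos_INR n).
pose proof (hm_nonneg n). pose proof (hm_le n). rewrite Rabs_right; nra. Qed.

Lemma bnd_bb n : Rabs (bb n) <= INR n + 1.
Proof. unfold bb. pose proof (cc_pos n). pose proof (cc_le1 n). pose proof (pos_INR n).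
pose proof (hm_nonneg (S n)). pose proof (hm_le (S n)). rewrite S_INR in *. pose proof (inv21 n).
unfold Rdiv. assert (0 <= cc n * hm (S n)) by nra. assert (cc n * hm (S n) <= INR n + 1) by nra.
rewrite Rabs_right; nra. Qed.

Lemma ex_n a y : Rbar_le 1 (CV_radius a) -> Rabs y < 1 -> ex_pseries (fun n => INR n * a n) y.
Proof. intros H Hy.
assert (E : ex_pseries (PS_incr_1 (PS_derive a)) y).
{ apply ex_pseries_incr_1. apply ex_pseries_derive. apply inside1; auto. }
eapply ex_series_ext. 2: exact E. intros [|n]; unfold PS_incr_1, PS_derive; simpl.
- rewrite Rmult_0_l. reflexivity.
- reflexivity.
Qed.

Lemma bnd_n a n : Rabs (a n) <= 1 -> Rabs (INR n * a n) <= INR n + 1.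
Proof. intros H. rewrite Rabs_mult, Rabs_right. 2: apply Rle_ge, pos_INR.
pose proof (pos_INR n). pose proof (Rabs_pos (a n)). nra. Qed.

Lemma bnd_n2 a n : Rabs (a n) <= INR n + 1 -> Rabs (INR n * a n) <= INR n * (INR n + 1).
Proof. intros H. rewrite Rabs_mult, Rabs_right. 2: apply Rle_ge, pos_INR.
pose proof (pos_INR n). apply Rmult_le_compat_l; auto. Qed.

Lemma rc : Rbar_le 1 (CV_radius cc). Proof. apply radius_ge1, bnd_cc. Qed.
Lemma rcb : Rbar_le 1 (CV_radius cb). Proof. apply radius_ge1, bnd_cb. Qed.
Lemma rqq : Rbar_le 1 (CV_radius qq). Proof. apply radius_ge1, bnd_qq. Qed.
Lemma rbb : Rbar_le 1 (CV_radius bb). Proof. apply radius_ge1, bnd_bb. Qed.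

Lemma exr a y : Rbar_le 1 (CV_radius a) -> Rabs y < 1 -> ex_pseries a y.
Proof. intros. apply CV_radius_inside, inside1; auto. Qed.

Lemma ex_lin u v y al be : ex_pseries u y -> ex_pseries v y ->
  ex_pseries (fun n => al * u n + be * v n) y.
Proof. intros Hu Hv.
assert (E: ex_pseries (PS_plus (PS_scal al u) (PS_scal be v)) y).
{ apply ex_pseries_plus; apply ex_pseries_scal; try apply Rmult_comm; auto. }
eapply ex_series_ext. 2: exact E. intros n. reflexivity. Qed.

Lemma ode_cc y : Rabs y < 1 -> (1 - y) * PSeries (PS_derive cc) y = /2 * PSeries cc y.
Proof. intros Hy.
assert (E1 : PSeries (PS_derive cc) y = 1 * PSeries (fun n => INR n * cc n) y + /2 * PSeries cc y).
{ rewrite <- PS_lin. apply PSeries_ext. intros n; rewrite dcc; ring.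
  apply ex_n; auto. apply rc. apply exr; auto. apply rc. }
assert (E2 := L_yd cc y).
replace ((1 - y) * PSeries (PS_derive cc) y) with (PSeries (PS_derive cc) y - y * PSeries (PS_derive cc) y) by ring.
rewrite E2, E1. ring. Qed.

Lemma ode_qq y : Rabs y < 1 -> (1 - y) * PSeries (PS_derive qq) y = /2 * PSeries qq y + /2 * PSeries cc y.
Proof. intros Hy.
assert (E1 : PSeries (PS_derive qq) y = 1 * PSeries (fun n => INR n * qq n) y + 1 * PSeries (fun n => /2 * qq n + /2 * cc n) y).
{ rewrite <- PS_lin. apply PSeries_ext. intros n; rewrite dqq; ring.
  apply ex_n; auto. apply rqq. apply ex_lin; apply exr; auto. apply rqq. apply rc. }
rewrite PS_lin in E1. 2,3: apply exr; auto. 2: apply rqq. 2: apply rc.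
assert (E2 := L_yd qq y).
replace ((1 - y) * PSeries (PS_derive qq) y) with (PSeries (PS_derive qq) y - y * PSeries (PS_derive qq) y) by ring.
rewrite E2, E1. ring. Qed.

Lemma id_cb y : Rabs y < 1 -> PSeries cb y + 2 * (y * PSeries (PS_derive cb) y) = PSeries cc y.
Proof. intros Hy. rewrite L_yd.
replace (PSeries cb y + 2 * PSeries (fun n => INR n * cb n) y) with
  (1 * PSeries cb y + 2 * PSeries (fun n => INR n * cb n) y) by ring.
rewrite <- PS_lin. apply PSeries_ext. intros n. rewrite Rmult_1_l. apply bcb.
apply exr; auto. apply rcb. apply ex_n; auto. apply rcb. Qed.

Lemma id_bb y : Rabs y < 1 -> PSeries bb y + 2 * (y * PSeries (PS_derive bb) y) = PSeries qq y + PSeries cb y.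
Proof. intros Hy. rewrite L_yd.
replace (PSeries bb y + 2 * PSeries (fun n => INR n * bb n) y) with
  (1 * PSeries bb y + 2 * PSeries (fun n => INR n * bb n) y) by ring.
replace (PSeries qq y + PSeries cb y) with (1 * PSeries qq y + 1 * PSeries cb y) by ring.
rewrite <- !PS_lin. apply PSeries_ext. intros n. rewrite !Rmult_1_l. apply bbb.
apply exr; auto. apply rqq. apply exr; auto. apply rcb.
apply exr; auto. apply rbb. apply ex_n; auto. apply rbb. Qed.

Lemma const_int (f : R -> R) lo hi : (forall t, lo < t < hi -> is_derive f t 0) ->
  forall x y, lo < x < hi -> lo < y < hi -> f x = f y.
Proof. intros H x y Hx Hy.
destruct (Rtotal_order x y) as [Hl|[He|Hg]].
- apply eq_is_derive; auto. intros t Ht. apply H. lra.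
- subst; reflexivity.
- symmetry. apply eq_is_derive; auto. intros t Ht. apply H. lra.
Qed.

Lemma is_derive_val (f : R -> R) x l l' : is_derive f x l -> l = l' -> is_derive f x l'.
Proof. intros H ->; exact H. Qed.

Lemma sin2_lt1 t : -PI/2 < t < PI/2 -> Rabs (sin t ^ 2) < 1.
Proof. intros Ht. pose proof (cos_gt_0 t ltac:(lra) ltac:(lra)).
pose proof (sin2_cos2 t). unfold Rsqr in *. rewrite Rabs_right. nra. nra. Qed.

Lemma d_sin2 a t : Rbar_le 1 (CV_radius a) -> -PI/2 < t < PI/2 ->
  is_derive (fun t => PSeries a (sin t ^ 2)) t (2 * sin t * cos t * PSeries (PS_derive a) (sin t ^ 2)).
Proof. intros Ha Ht.
eapply is_derive_val.
- apply (is_derive_comp (PSeries a) (fun t => sin t ^ 2)).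
  + apply is_derive_PSeries. apply inside1; auto. apply sin2_lt1; auto.
  + auto_derive. auto. reflexivity.
- simpl. unfold scal; simpl. unfold mult; simpl. ring.
Qed.

Lemma d_cos t : is_derive cos t (- sin t).
Proof. auto_derive. auto. ring. Qed.
Lemma d_sin t : is_derive sin t (cos t).
Proof. auto_derive. auto. ring. Qed.

Lemma cos_pos t : -PI/2 < t < PI/2 -> 0 < cos t.
Proof. intros; apply cos_gt_0; lra. Qed.

Lemma I1 t : -PI/2 < t < PI/2 -> PSeries cc (sin t ^ 2) * cos t = 1.
Proof. intros Ht.
assert (E : forall x y, -PI/2 < x < PI/2 -> -PI/2 < y < PI/2 ->
  (fun t => PSeries cc (sin t ^ 2) * cos t) x = (fun t => PSeries cc (sin t ^ 2) * cos t) y).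
{ apply const_int. intros u Hu.
  eapply is_derive_val. apply (is_derive_mult (fun t => PSeries cc (sin t ^ 2)) cos).
  apply d_sin2; auto. apply rc. apply d_cos. intros; apply Rmult_comm.
  unfold plus, mult; simpl. unfold plus, mult; simpl. try replace (sin u * (sin u * 1)) with (sin u ^ 2) by ring.
  pose proof (ode_cc (sin u ^ 2) (sin2_lt1 u Hu)) as O.
  pose proof (sin2_cos2 u) as SC. unfold Rsqr in SC.
  set (D := PSeries (PS_derive cc) (sin u ^ 2)) in *.
  set (F := PSeries cc (sin u ^ 2)) in *.
  replace (2 * sin u * cos u * D * cos u) with (2 * sin u * D * (cos u * cos u)) by ring.
  replace (cos u * cos u) with (1 - sin u ^ 2) by nra.
  replace (2 * sin u * D * (1 - sin u ^ 2)) with (2 * sin u * ((1 - sin u ^ 2) * D)) by ring.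
  rewrite O. field. }
rewrite (E t 0); auto. 2: split; pose proof PI_RGT_0; lra.
simpl. rewrite sin_0, cos_0. replace (0 * (0 * 1)) with 0 by ring. rewrite PSeries_0. simpl. ring.
Qed.

Lemma I2 t : -PI/2 < t < PI/2 -> sin t * PSeries cb (sin t ^ 2) = t.
Proof. intros Ht.
assert (E : forall x y, -PI/2 < x < PI/2 -> -PI/2 < y < PI/2 ->
  (fun t => sin t * PSeries cb (sin t ^ 2) - t) x = (fun t => sin t * PSeries cb (sin t ^ 2) - t) y).
{ apply const_int. intros u Hu.
  eapply is_derive_val. apply (is_derive_minus (fun t => sin t * PSeries cb (sin t ^ 2)) (fun t => t)).
  apply (is_derive_mult sin (fun t => PSeries cb (sin t ^ 2))).
  apply d_sin. apply d_sin2; auto. apply rcb. intros; apply Rmult_comm. apply is_derive_id.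
  unfold minus, plus, opp, mult, one; simpl. unfold plus, opp, mult; simpl. try replace (sin u * (sin u * 1)) with (sin u ^ 2) by ring.
  pose proof (id_cb (sin u ^ 2) (sin2_lt1 u Hu)) as O.
  pose proof (I1 u Hu) as I.
  set (D := PSeries (PS_derive cb) (sin u ^ 2)) in *.
  set (F := PSeries cb (sin u ^ 2)) in *.
  transitivity (cos u * (F + 2 * (sin u ^ 2 * D)) - 1). ring.
  rewrite O. rewrite Rmult_comm, I. ring. }
specialize (E t 0 Ht ltac:(pose proof PI_RGT_0; lra)). cbv beta in E.
rewrite sin_0 in E. rewrite Rmult_0_l in E. lra.
Qed.

Lemma I3 t : -PI/2 < t < PI/2 -> PSeries qq (sin t ^ 2) * cos t = - ln (cos t).
Proof. intros Ht.
assert (E : forall x y, -PI/2 < x < PI/2 -> -PI/2 < y < PI/2 ->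
  (fun t => PSeries qq (sin t ^ 2) * cos t + ln (cos t)) x = (fun t => PSeries qq (sin t ^ 2) * cos t + ln (cos t)) y).
{ apply const_int. intros u Hu.
  pose proof (cos_pos u Hu) as Cp.
  eapply is_derive_val. apply (is_derive_plus (fun t => PSeries qq (sin t ^ 2) * cos t) (fun t => ln (cos t))).
  apply (is_derive_mult (fun t => PSeries qq (sin t ^ 2)) cos).
  apply d_sin2; auto. apply rqq. apply d_cos. intros; apply Rmult_comm.
  auto_derive. auto. reflexivity.
  unfold plus, mult; simpl. unfold plus, mult; simpl. try replace (sin u * (sin u * 1)) with (sin u ^ 2) by ring.
  pose proof (ode_qq (sin u ^ 2) (sin2_lt1 u Hu)) as O.
  pose proof (I1 u Hu) as I.
  pose proof (sin2_cos2 u) as SC. unfold Rsqr in SC.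
  set (D := PSeries (PS_derive qq) (sin u ^ 2)) in *.
  set (F := PSeries qq (sin u ^ 2)) in *.
  set (G := PSeries cc (sin u ^ 2)) in *.
  replace (2 * sin u * cos u * D * cos u) with (2 * sin u * D * (cos u * cos u)) by ring.
  replace (cos u * cos u) with (1 - sin u ^ 2) by nra.
  replace (2 * sin u * D * (1 - sin u ^ 2)) with (2 * sin u * ((1 - sin u ^ 2) * D)) by ring.
  rewrite O.
  replace (/ cos u) with G. field.
  apply (Rmult_eq_reg_r (cos u)). rewrite I, Rinv_l; lra. lra. }
specialize (E t 0 Ht ltac:(pose proof PI_RGT_0; lra)). cbv beta in E.
rewrite sin_0, cos_0, ln_1 in E. replace (0 ^ 2) with 0 in E by ring. rewrite PSeries_0 in E.
replace (qq 0%nat) with 0 in E by (unfold qq; simpl; ring). lra.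
Qed.

Definition TT t := sin t * PSeries bb (sin t ^ 2).
Definition Phi t := TT t - t * ln (sin t).

Lemma dTT t : -PI/2 < t < PI/2 -> is_derive TT t (- ln (cos t) + cos t * PSeries cb (sin t ^ 2)).
Proof. intros Hu.
eapply is_derive_val. apply (is_derive_mult sin (fun t => PSeries bb (sin t ^ 2))).
apply d_sin. apply d_sin2; auto. apply rbb. intros; apply Rmult_comm.
unfold plus, mult; simpl. unfold plus, mult; simpl. try replace (sin t * (sin t * 1)) with (sin t ^ 2) by ring.
pose proof (id_bb (sin t ^ 2) (sin2_lt1 t Hu)) as O.
pose proof (I3 t Hu) as I.
set (D := PSeries (PS_derive bb) (sin t ^ 2)) in *.
set (F := PSeries bb (sin t ^ 2)) in *.
transitivity (cos t * (F + 2 * (sin t ^ 2 * D))). ring.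
rewrite O. rewrite <- I. ring.
Qed.

Lemma sin_pos' t : 0 < t < PI/2 -> 0 < sin t.
Proof. intros; apply sin_gt_0; lra. Qed.

Lemma dPhi t : 0 < t < PI/2 -> is_derive Phi t (- ln (sin t) - ln (cos t)).
Proof. intros Ht.
assert (Ht' : -PI/2 < t < PI/2) by lra.
pose proof (sin_pos' t Ht) as Sp.
eapply is_derive_val. apply (is_derive_minus TT (fun t => t * ln (sin t))).
apply dTT; auto. auto_derive. auto. reflexivity.
unfold minus, plus, opp; simpl. unfold plus, opp; simpl. try replace (sin t * (sin t * 1)) with (sin t ^ 2) by ring.
pose proof (I2 t Ht') as I.
set (B := PSeries cb (sin t ^ 2)) in *.
replace (t * (1 * cos t * / sin t)) with (B * cos t). ring. transitivity ((sin t * B) * (cos t / sin t)). field. lra. rewrite I. field. lra.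
Qed.

Lemma lnsc x : 0 < x < PI/2 -> ln (sin x) + ln (cos x) = ln (sin (2*x)) - ln 2.
Proof. intros Hx. pose proof (sin_pos' x Hx). pose proof (cos_pos x ltac:(lra)).
rewrite sin_2a. rewrite !ln_mult; try lra; try (apply Rmult_lt_0_compat; lra).
Qed.

Lemma Hsym1 a : 0 < a < PI/2 -> Phi a + Phi (PI/2 - a) = 2 * Phi (PI/4).
Proof. intros Ha.
assert (E : forall x y, 0 < x < PI/2 -> 0 < y < PI/2 ->
  (fun a => Phi a + Phi (PI/2 - a)) x = (fun a => Phi a + Phi (PI/2 - a)) y).
{ apply const_int. intros u Hu.
  eapply is_derive_val. apply (is_derive_plus Phi (fun a => Phi (PI/2 - a))).
  apply dPhi; auto.
  apply (is_derive_comp Phi (fun a => PI/2 - a)). apply dPhi; lra.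
  auto_derive. auto. reflexivity.
  unfold plus, scal; simpl. unfold plus, mult; simpl.
  rewrite sin_shift, cos_shift. ring. }
pose proof PI_RGT_0.
rewrite (E a (PI/4)); auto. 2: lra. cbv beta. replace (PI/2 - PI/4) with (PI/4) by field. ring.
Qed.

Definition H2f t := Phi t - 2 * Phi (t/2) + 2 * Phi (PI/4 - t/2) + (2*t - PI/2) * ln 2.

Lemma Hsym2 a : 0 < a < PI/2 -> H2f a = H2f (PI/2 - a).
Proof. intros Ha. pose proof PI_RGT_0.
apply const_int with (lo := 0) (hi := PI/2); try lra.
intros u Hu. unfold H2f.
auto_derive.
{ repeat split; eexists; apply dPhi; lra. }
change (fun x : R => Phi x) with Phi.
replace (u * / 2) with (u/2) by reflexivity.
replace (PI / 4 + - (u / 2)) with (PI/4 - u/2) by ring.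
rewrite (is_derive_unique _ _ _ (dPhi u Hu)).
rewrite (is_derive_unique _ _ _ (dPhi (u/2) ltac:(lra))).
rewrite (is_derive_unique _ _ _ (dPhi (PI/4 - u/2) ltac:(lra))).
assert (L1 := lnsc (u/2) ltac:(lra)). replace (2 * (u/2)) with u in L1 by field.
assert (L2 := lnsc (PI/4 - u/2) ltac:(lra)). replace (2 * (PI/4 - u/2)) with (PI/2 - u) in L2 by field.
rewrite sin_shift in L2.
transitivity (- (ln (sin u)) - ln (cos u) + (ln (sin (u / 2)) + ln (cos (u / 2))) + (ln (sin (PI / 4 - u / 2)) + ln (cos (PI / 4 - u / 2))) + 2 * ln 2).
field. rewrite L1, L2. ring.
Qed.

Definition tends0 (f : R -> R) (A : R) := forall eps, 0 < eps ->
  exists del, 0 < del /\ forall a, 0 < a < del -> Rabs (f a - A) < eps.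

Lemma cont_eps (f : R -> R) x l : is_derive f x l -> forall eps, 0 < eps ->
  exists del, 0 < del /\ forall y, Rabs (y - x) < del -> Rabs (f y - f x) < eps.
Proof. intros H eps He.
assert (C : continuity_pt f x).
{ apply derivable_continuous_pt. exists l. apply is_derive_Reals. exact H. }
destruct (C eps He) as [d [Hd K]].
exists d. split. lra. intros y Hy.
destruct (Req_dec y x) as [->|Hne]. rewrite Rminus_diag, Rabs_R0; auto.
apply (K y). split. split. exact I. auto. exact Hy.
Qed.

Lemma tends0_cont (f : R -> R) g x l : is_derive f x l -> (forall a, g a = f (x + a)) -> tends0 g (f x).
Proof. intros H Hg eps He. destruct (cont_eps f x l H eps He) as [d [Hd Hy]].
exists d. split; auto. intros a Ha. rewrite Hg. apply Hy.
replace (x + a - x) with a by ring. rewrite Rabs_right; lra. Qed.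

Lemma tends0_ext f g A eta : 0 < eta -> (forall a, 0 < a < eta -> f a = g a) -> tends0 f A -> tends0 g A.
Proof. intros He E H eps Hp. destruct (H eps Hp) as [d [Hd Hy]].
exists (Rmin d eta). split. apply Rmin_pos; auto. intros a Ha.
pose proof (Rmin_l d eta). pose proof (Rmin_r d eta).
rewrite <- E by lra. apply Hy; lra. Qed.

Lemma tends0_const A : tends0 (fun _ => A) A.
Proof. intros eps He. exists 1. split. lra. intros. rewrite Rminus_diag, Rabs_R0. auto. Qed.

Lemma tends0_plus f g A B : tends0 f A -> tends0 g B -> tends0 (fun a => f a + g a) (A + B).
Proof. intros Hf Hg eps He.
destruct (Hf (eps/2) ltac:(lra)) as [d1 [H1 K1]].
destruct (Hg (eps/2) ltac:(lra)) as [d2 [H2 K2]].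
exists (Rmin d1 d2). split. apply Rmin_pos; auto. intros a Ha.
pose proof (Rmin_l d1 d2). pose proof (Rmin_r d1 d2).
specialize (K1 a ltac:(lra)). specialize (K2 a ltac:(lra)).
replace (f a + g a - (A + B)) with ((f a - A) + (g a - B)) by ring.
eapply Rle_lt_trans. apply Rabs_triang. lra. Qed.

Lemma tends0_scal f A k : tends0 f A -> tends0 (fun a => k * f a) (k * A).
Proof. intros Hf eps He.
destruct (Hf (eps / (Rabs k + 1))) as [d [Hd K]].
{ apply Rdiv_lt_0_compat; auto. pose proof (Rabs_pos k). lra. }
exists d. split; auto. intros a Ha. specialize (K a Ha).
replace (k * f a - k * A) with (k * (f a - A)) by ring. rewrite Rabs_mult.
pose proof (Rabs_pos k). pose proof (Rabs_pos (f a - A)).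
apply Rle_lt_trans with ((Rabs k + 1) * Rabs (f a - A)). nra.
apply (Rmult_lt_compat_l (Rabs k + 1)) in K. 2: lra.
replace ((Rabs k + 1) * (eps / (Rabs k + 1))) with eps in K by (field; lra). exact K.
Qed.

Lemma tends0_half f A : tends0 f A -> tends0 (fun a => f (a/2)) A.
Proof. intros Hf eps He. destruct (Hf eps He) as [d [Hd K]].
exists d. split; auto. intros a Ha. apply K. lra. Qed.

Lemma tends0_uniq f A B : tends0 f A -> tends0 f B -> A = B.
Proof. intros HA HB.
destruct (Req_dec A B) as [|Hne]; auto. exfalso.
set (e := Rabs (A - B) / 2).
assert (He : 0 < e). { unfold e. apply Rdiv_lt_0_compat. apply Rabs_pos_lt. lra. lra. }
destruct (HA e He) as [d1 [H1 K1]]. destruct (HB e He) as [d2 [H2 K2]].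
set (a := Rmin d1 d2 / 2).
assert (0 < a < d1 /\ 0 < a < d2).
{ unfold a. pose proof (Rmin_l d1 d2). pose proof (Rmin_r d1 d2). pose proof (Rmin_pos d1 d2 H1 H2). lra. }
specialize (K1 a ltac:(tauto)). specialize (K2 a ltac:(tauto)).
assert (Rabs (A - B) <= Rabs (f a - B) + Rabs (f a - A)).
{ replace (A - B) with ((f a - B) - (f a - A)) by ring. eapply Rle_trans. apply Rabs_triang.
  rewrite Rabs_Ropp. lra. }
unfold e in *. lra.
Qed.

Lemma tends0_le f g A B eta : 0 < eta -> (forall a, 0 < a < eta -> f a <= g a) ->
  tends0 f A -> tends0 g B -> A <= B.
Proof. intros Heta Hle HA HB.
destruct (Rle_dec A B) as [|Hn]; auto. exfalso.
set (e := (A - B) / 2).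
assert (He : 0 < e) by (unfold e; lra).
destruct (HA e He) as [d1 [H1 K1]]. destruct (HB e He) as [d2 [H2 K2]].
set (a := Rmin eta (Rmin d1 d2) / 2).
pose proof (Rmin_l d1 d2). pose proof (Rmin_r d1 d2). pose proof (Rmin_pos d1 d2 H1 H2).
pose proof (Rmin_l eta (Rmin d1 d2)). pose proof (Rmin_r eta (Rmin d1 d2)). pose proof (Rmin_pos eta _ Heta (Rmin_pos d1 d2 H1 H2)).
assert (0 < a < d1 /\ 0 < a < d2 /\ 0 < a < eta) by (unfold a; lra).
specialize (K1 a ltac:(tauto)). specialize (K2 a ltac:(tauto)). specialize (Hle a ltac:(tauto)).
apply Rabs_def2 in K1. apply Rabs_def2 in K2. unfold e in *. lra.
Qed.

Lemma ln_le_m1 u : 0 < u -> ln u <= u - 1.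
Proof. intros Hu. pose proof (exp_ineq1_le (ln u)). rewrite exp_ln in H; lra. Qed.

Lemma mxlnx a : 0 < a -> - (a * ln a) <= 2 * sqrt a.
Proof. intros Ha. pose proof (sqrt_lt_R0 a Ha) as Hr. pose proof (sqrt_sqrt a ltac:(lra)) as Hs.
set (r := sqrt a) in *. rewrite <- Hs. rewrite ln_mult by lra.
pose proof (ln_le_m1 (/ r) ltac:(apply Rinv_0_lt_compat; lra)) as L. rewrite ln_Rinv in L by lra.
assert (- ln r <= / r) by lra.
assert (r * r * (- ln r) <= r * r * / r). { apply Rmult_le_compat_l. nra. lra. }
replace (r * r * / r) with r in H0 by (field; lra). nra. Qed.

Lemma sin_lb2 a : 0 < a <= 1 -> a / 2 <= sin a.
Proof. intros Ha. pose proof PI2_1.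
destruct (sin_bound a 0 ltac:(lra) ltac:(lra)) as [L _].
unfold sin_approx, sin_term in L. simpl in L.
assert (a^3 <= a) by (simpl; nra). simpl in H0. lra. Qed.

Lemma tends_alnsin : tends0 (fun a => a * ln (sin a)) 0.
Proof. intros eps He.
exists (Rmin 1 ((eps/4)^2)). split. apply Rmin_pos. lra. apply pow_lt; lra.
intros a Ha. pose proof (Rmin_l 1 ((eps/4)^2)). pose proof (Rmin_r 1 ((eps/4)^2)).
assert (Ha1 : 0 < a <= 1) by lra.
pose proof (sin_lb2 a Ha1). pose proof (SIN_bound a) as [_ S1].
assert (Hl0 : ln (sin a) <= 0). { rewrite <- ln_1. apply ln_le; lra. }
assert (Hl1 : ln (a/2) <= ln (sin a)). { apply ln_le; lra. }
unfold Rdiv in Hl1. rewrite ln_mult, ln_Rinv in Hl1 by lra.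
pose proof (mxlnx a ltac:(lra)).
assert (Hs : sqrt a < eps/4).
{ rewrite <- (sqrt_pow2 (eps/4)) by lra. apply sqrt_lt_1; lra. }
assert (ln 2 < 1). { pose proof (exp_ineq1 1 ltac:(lra)). rewrite <- (ln_exp 1). apply ln_increasing; lra. }
assert (0 < ln 2). { rewrite <- ln_1. apply ln_increasing; lra. }
assert (a <= sqrt a). { pose proof (sqrt_sqrt a ltac:(lra)). pose proof (sqrt_lt_R0 a ltac:(lra)). nra. }
rewrite Rminus_0_r. rewrite Rabs_left1. 2: nra.
nra.
Qed.

Lemma tends0_cont2 (f : R -> R) x l : is_derive f x l -> tends0 (fun a => f (x - a/2)) (f x).
Proof. intros H eps He. destruct (cont_eps f x l H eps He) as [d [Hd Hy]].
exists d. split; auto. intros a Ha. apply Hy.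
replace (x - a/2 - x) with (-(a/2)) by ring. rewrite Rabs_Ropp, Rabs_right; lra. Qed.

Lemma tends0_id : tends0 (fun a => a) 0.
Proof. intros eps He. exists eps. split; auto. intros a Ha. rewrite Rminus_0_r, Rabs_right; lra. Qed.

Lemma TT0 : TT 0 = 0.
Proof. unfold TT. rewrite sin_0. ring. Qed.

Lemma tends_TT : tends0 TT 0.
Proof. rewrite <- TT0. apply (tends0_cont TT TT 0 _ (dTT 0 ltac:(pose proof PI_RGT_0; lra))).
intros a. f_equal. ring. Qed.

Lemma tends_Phi : tends0 Phi 0.
Proof.
assert (H := tends0_plus _ _ _ _ tends_TT (tends0_scal _ _ (-1) tends_alnsin)).
replace (0 + -1 * 0) with 0 in H by ring.
apply (tends0_ext (fun a => TT a + -1 * (a * ln (sin a))) Phi 0 1). lra. intros; unfold Phi; ring. exact H.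
Qed.

Lemma P_val : Phi (PI/4) = PI/2 * ln 2.
Proof. pose proof PI_RGT_0.
set (P := Phi (PI/4)).
set (g := fun a => 2 * Phi a + (-4) * Phi (a/2) + 4 * Phi (PI/4 - a/2) + (4 * ln 2) * a + (- (PI * ln 2))).
assert (G1 : forall a, 0 < a < PI/2 -> g a = 2 * P).
{ intros a Ha. unfold g. pose proof (Hsym2 a Ha) as K2. pose proof (Hsym1 a Ha) as K1.
  unfold H2f in K2.
  replace ((PI/2 - a)/2) with (PI/4 - a/2) in K2 by field.
  replace (PI/4 - (PI/4 - a/2)) with (a/2) in K2 by field.
  fold P in K1. lra. }
assert (T1 : tends0 g (2 * P)).
{ eapply tends0_ext with (f := fun _ => 2 * P). 2: intros a Ha; symmetry; apply G1; exact Ha. lra.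
  apply tends0_const. }
assert (T2 : tends0 g (2 * 0 + (-4) * 0 + 4 * P + (4 * ln 2) * 0 + (- (PI * ln 2)))).
{ unfold g. apply tends0_plus. apply tends0_plus. apply tends0_plus. apply tends0_plus.
  apply tends0_scal, tends_Phi. apply tends0_scal, tends0_half, tends_Phi.
  apply tends0_scal. unfold P. apply (tends0_cont2 Phi (PI/4) _ (dPhi (PI/4) ltac:(lra))).
  apply tends0_scal, tends0_id. apply tends0_const. }
pose proof (tends0_uniq _ _ _ T1 T2). lra.
Qed.

Lemma bb_nonneg n : 0 <= bb n.
Proof. unfold bb. pose proof (cc_pos n). pose proof (hm_nonneg (S n)). pose proof (inv21 n).
unfold Rdiv. apply Rmult_le_pos. nra. lra. Qed.

Lemma TT_cos a : TT (PI/2 - a) = cos a * PSeries bb (cos a ^ 2).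
Proof. unfold TT. rewrite sin_shift. reflexivity. Qed.

Lemma tends_TTc : tends0 (fun a => TT (PI/2 - a)) (PI * ln 2).
Proof. pose proof PI_RGT_0.
pose (Fc := fun a => (PI/2 - a) * ln (cos a)).
assert (K : tends0 Fc (Fc 0)).
{ assert (D : exists l, is_derive Fc 0 l).
  { eexists. unfold Fc. auto_derive. rewrite cos_0; lra. reflexivity. }
  destruct D as [l D]. apply (tends0_cont Fc Fc 0 l D). intros; unfold Fc; rewrite Rplus_0_l; reflexivity. }
unfold Fc in K.
cbv beta in K. rewrite cos_0, ln_1, Rmult_0_r in K.
assert (K2 := tends0_plus _ _ _ _ (tends0_plus _ _ _ _ (tends0_const (2 * Phi (PI/4))) (tends0_scal _ _ (-1) tends_Phi)) K).
rewrite P_val in K2. replace (2 * (PI / 2 * ln 2) + -1 * 0 + 0) with (PI * ln 2) in K2 by field.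
apply (tends0_ext (fun a => 2 * (PI / 2 * ln 2) + -1 * Phi a + (PI / 2 - a) * ln (cos a)) (fun a => TT (PI/2 - a)) (PI * ln 2) (PI/2)). lra.
2: exact K2.
intros a Ha. rewrite <- P_val.
rewrite <- (Hsym1 a Ha). unfold Phi at 2. rewrite sin_shift. ring.
Qed.

Lemma ps_inf a y : Rbar_le 1 (CV_radius a) -> Rabs y < 1 -> infinite_sum (fun k => a k * y ^ k) (PSeries a y).
Proof. intros Ha Hy. apply is_series_Reals. apply Series_correct.
apply ex_series_Rabs. apply CV_disk_inside. apply inside1; auto. Qed.

Lemma pow_decr y k N : 0 <= y <= 1 -> (k <= N)%nat -> y ^ N <= y ^ k.
Proof. intros Hy HkN. induction HkN. lra. simpl.
pose proof (pow_le y m ltac:(lra)). nra. Qed.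

Lemma partial_le N : sum_f_R0 bb N <= PI * ln 2.
Proof. pose proof PI_RGT_0.
set (S := sum_f_R0 bb N).
pose (Fc := fun a => S * (cos a ^ 2) ^ N * cos a).
assert (T : tends0 Fc (Fc 0)).
{ assert (D : exists l, is_derive Fc 0 l).
  { eexists. unfold Fc. auto_derive. auto. reflexivity. }
  destruct D as [l D]. apply (tends0_cont Fc Fc 0 l D). intros; unfold Fc; rewrite Rplus_0_l; reflexivity. }
unfold Fc in T.
cbv beta in T. rewrite cos_0 in T. replace (S * (1 ^ 2) ^ N * 1) with S in T by (rewrite !pow1; ring).
apply (tends0_le (fun a => S * (cos a ^ 2) ^ N * cos a) (fun a => TT (PI/2 - a)) S (PI*ln 2) (PI/2)). lra.
2: exact T. 2: apply tends_TTc.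
intros a Ha. rewrite TT_cos.
pose proof (cos_pos a ltac:(lra)) as Cp. pose proof (COS_bound a) as [_ C1].
set (y := cos a ^ 2).
assert (Hy : 0 <= y <= 1) by (unfold y; simpl; nra).
assert (Hy1 : Rabs y < 1).
{ unfold y. pose proof (sin_pos' a Ha). pose proof (sin2_cos2 a). unfold Rsqr in *. rewrite Rabs_right; simpl; nra. }
assert (I1 : sum_f_R0 (fun k => bb k * y ^ k) N <= PSeries bb y).
{ apply sum_incr. apply ps_inf; auto. apply rbb. intros n. apply Rmult_le_pos. apply bb_nonneg. apply pow_le; lra. }
assert (I2 : S * y ^ N <= sum_f_R0 (fun k => bb k * y ^ k) N).
{ unfold S. rewrite Rmult_comm, scal_sum. apply sum_Rle. intros n Hn. apply Rmult_le_compat_l. apply bb_nonneg.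
  apply pow_decr; auto. }
assert (0 <= S). { unfold S. apply cond_pos_sum. apply bb_nonneg. }
apply Rmult_le_compat_r with (r := cos a) in I1; [|lra].
apply Rmult_le_compat_r with (r := cos a) in I2; [|lra]. lra.
Qed.

Lemma psum_mono M n : (M <= n)%nat -> sum_f_R0 bb M <= sum_f_R0 bb n.
Proof. intros H. induction H. lra. simpl. pose proof (bb_nonneg (S m)). lra. Qed.

Lemma main_sum : infinite_sum bb (PI * ln 2).
Proof. pose proof PI_RGT_0.
intros eps He.
destruct (tends_TTc (eps/2) ltac:(lra)) as [d [Hd K]].
set (a := Rmin d (PI/4) / 2).
assert (Ha : 0 < a < d /\ 0 < a < PI/2).
{ unfold a. pose proof (Rmin_l d (PI/4)). pose proof (Rmin_r d (PI/4)).
  pose proof (Rmin_pos d (PI/4) Hd ltac:(lra)). lra. }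
destruct Ha as [Ha1 Ha2].
specialize (K a Ha1). rewrite TT_cos in K.
pose proof (cos_pos a ltac:(lra)) as Cp. pose proof (COS_bound a) as [_ C1].
set (y := cos a ^ 2) in *.
assert (Hy : 0 <= y <= 1) by (unfold y; simpl; nra).
assert (Hy1 : Rabs y < 1).
{ unfold y. pose proof (sin_pos' a Ha2). pose proof (sin2_cos2 a). unfold Rsqr in *. rewrite Rabs_right; simpl; nra. }
destruct (ps_inf bb y rbb Hy1 (eps/2) ltac:(lra)) as [M HM].
specialize (HM M (le_n M)). unfold Rdist in HM.
set (Fy := PSeries bb y) in *.
set (pM := sum_f_R0 (fun k => bb k * y ^ k) M) in *.
assert (P1 : pM <= sum_f_R0 bb M).
{ unfold pM. apply sum_Rle. intros k _. pose proof (bb_nonneg k).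
  pose proof (pow_decr y 0 k Hy ltac:(lia)). simpl in H1. nra. }
assert (P0 : 0 <= pM). { unfold pM. apply cond_pos_sum. intros k. apply Rmult_le_pos. apply bb_nonneg. apply pow_le; lra. }
apply Rabs_def2 in HM. apply Rabs_def2 in K.
assert (cos a * pM <= pM) by nra.
assert (cos a * Fy - cos a * (eps/2) <= cos a * pM).
{ replace (cos a * Fy - cos a * (eps/2)) with (cos a * (Fy - eps/2)) by ring. apply Rmult_le_compat_l; lra. }
assert (cos a * (eps/2) <= eps/2) by nra.
exists M. intros n Hn. unfold Rdist.
pose proof (psum_mono M n Hn). pose proof (partial_le n).
rewrite Rabs_left1 by lra. lra.
Qed.

Definition aa k := 3 * (INR k + 1) / ((2 * INR k + 1) * (2 * INR k + 3) * cc k).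
Definition dd k := / ((2 * INR k + 1) * cc k).

Lemma poch1 m : poch 1 m = INR (fact m).
Proof. induction m. reflexivity. simpl poch. rewrite IHm. rewrite fact_simpl, mult_INR, S_INR. ring. Qed.

Lemma poch2 m : poch 2 m = INR (fact (S m)).
Proof. induction m. simpl. reflexivity. simpl poch. rewrite IHm.
rewrite (fact_simpl (S m)), mult_INR, !S_INR. ring. Qed.

Lemma pochh n : poch (1/2) n = cc n * INR (fact n).
Proof. induction n. simpl. ring. simpl poch. rewrite IHn.
rewrite fact_simpl, mult_INR, S_INR, cc_S. pose proof (pos_INR n). field. lra. Qed.

Lemma aa_S k : aa (S k) * (5/2 + INR k) = aa k * (2 + INR k).
Proof. unfold aa. rewrite cc_S, S_INR. pose proof (pos_INR k). pose proof (cc_pos k).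
field. repeat split; try lra. Qed.

Lemma poch52_pos k : 0 < poch (5/2) k.
Proof. induction k. simpl; lra. simpl. pose proof (pos_INR k). nra. Qed.

Lemma pochaa k : poch 2 k = aa k * poch (5/2) k.
Proof. induction k. unfold aa; simpl. field.
simpl poch. rewrite IHk. replace (aa (S k) * (poch (5/2) k * (5/2 + INR k))) with (poch (5/2) k * (aa (S k) * (5/2 + INR k))) by ring.
rewrite aa_S. ring. Qed.

Lemma fact_pos' n : 0 < INR (fact n).
Proof. apply lt_0_INR. apply lt_O_fact. Qed.

Lemma term_eq m n : kdf_term 1 1 m n = cc n ^ 2 * (aa (m + n) / (INR m + 1)).
Proof. unfold kdf_term. rewrite !pow1. rewrite (pochaa (m+n)), (poch2 m), !poch1, pochh.
pose proof (poch52_pos (m+n)). pose proof (fact_pos' m). pose proof (fact_pos' n).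
rewrite fact_simpl, mult_INR, S_INR. pose proof (pos_INR m). pose proof (cc_pos n).
field. repeat split; lra. Qed.

Lemma aa_tel m : aa m / (INR m + 1) = 3 * (dd m - dd (S m)).
Proof. unfold aa, dd. rewrite cc_S, S_INR. pose proof (pos_INR m). pose proof (cc_pos m).
field. repeat split; lra. Qed.

Lemma aa_step n m : (INR n + 1) * (aa (m + n) / (INR m + 1)) - (INR n + 3/2) * (aa (m + S n) / (INR m + 1))
  = aa (S (m + n)) - aa (m + n).
Proof. rewrite <- plus_n_Sm. pose proof (aa_S (m+n)) as E. rewrite plus_INR in *.
pose proof (pos_INR m). pose proof (pos_INR n).
apply (Rmult_eq_reg_r (INR m + 1)). 2: lra.
transitivity ((INR n + 1) * aa (m+n) - (INR n + 3/2) * aa (S (m+n))). field. lra.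
apply Rminus_diag_uniq.
transitivity (aa (m+n) * (2 + (INR m + INR n)) - aa (S (m+n)) * (5/2 + (INR m + INR n))). field.
rewrite E. field. Qed.

Lemma cc_sq_lb k : 1 <= cc k ^ 2 * (4 * INR k + 1).
Proof. induction k. simpl. lra. rewrite cc_S, S_INR. pose proof (pos_INR k). pose proof (cc_pos k).
set (c := cc k) in *. 
assert (E : (c * (2 * INR k + 1) / (2 * INR k + 2)) ^ 2 * (4 * (INR k + 1) + 1)
   = c^2 * ((2 * INR k + 1)^2 * (4 * INR k + 5)) / (2 * INR k + 2)^2) by (field; lra).
rewrite E. apply (Rmult_le_reg_r ((2 * INR k + 2)^2)). nra.
unfold Rdiv. rewrite Rmult_assoc, Rinv_l, Rmult_1_r, Rmult_1_l. 2: nra.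
assert ((2 * INR k + 1)^2 * (4 * INR k + 5) = (4 * INR k + 1) * (2 * INR k + 2)^2 + 1) by ring.
rewrite H1. assert (0 <= c^2) by nra. nra. Qed.

Lemma dd_pos k : 0 < dd k.
Proof. unfold dd. pose proof (pos_INR k). pose proof (cc_pos k). apply Rinv_0_lt_compat. nra. Qed.

Lemma dd_sq k : dd k ^ 2 <= 2 / (2 * INR k + 1).
Proof. unfold dd. pose proof (pos_INR k). pose proof (cc_pos k). pose proof (cc_sq_lb k).
rewrite pow_inv. apply (Rmult_le_reg_r (((2 * INR k + 1) * cc k) ^ 2)). nra.
rewrite Rinv_l. 2: nra.
replace (2 / (2 * INR k + 1) * ((2 * INR k + 1) * cc k) ^ 2) with (2 * (2 * INR k + 1) * cc k ^ 2) by (field; lra).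
nra. Qed.

Lemma dd_to0 : is_lim_seq dd 0.
Proof. apply is_lim_seq_Reals. intros eps He.
destruct (archimed (2 / (eps * eps))) as [Ha _].
assert (Hz : (0 <= up (2 / (eps * eps)))%Z).
{ apply le_IZR. assert (0 < 2 / (eps*eps)) by (apply Rdiv_lt_0_compat; nra). lra. }
exists (Z.to_nat (up (2 / (eps * eps)))). intros n Hn. unfold Rdist.
rewrite Rminus_0_r, Rabs_right. 2: left; apply dd_pos.
apply le_INR in Hn. rewrite INR_IZR_INZ, Z2Nat.id in Hn by auto.
pose proof (dd_sq n). pose proof (dd_pos n).
destruct (Rlt_dec (dd n) eps) as [|Hge]; auto. exfalso.
pose proof (pos_INR n). assert (eps * eps <= dd n ^ 2) by nra.
assert (2 / (2 * INR n + 1) < eps * eps).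
{ apply (Rmult_lt_reg_r (2 * INR n + 1)). nra.
  unfold Rdiv. rewrite Rmult_assoc, Rinv_l, Rmult_1_r by nra.
  assert (2 < eps * eps * INR n).
  { assert (Hn2 : 2 / (eps*eps) < INR n) by lra.
    apply Rmult_lt_compat_r with (r := eps*eps) in Hn2. 2: nra.
    replace (2 / (eps * eps) * (eps * eps)) with 2 in Hn2 by (field; lra). lra. }
  nra. }
lra. Qed.

Lemma aa_dd k : aa k = 3 * (INR k + 1) / (2 * INR k + 3) * dd k.
Proof. unfold aa, dd. pose proof (pos_INR k). pose proof (cc_pos k). field. repeat split; lra. Qed.

Lemma aa_to0 : is_lim_seq aa 0.
Proof. apply is_lim_seq_le_le with (u := fun _ => 0) (w := fun k => 3 * dd k).
- intros k. rewrite aa_dd. pose proof (pos_INR k). pose proof (dd_pos k).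
  assert (0 <= 3 * (INR k + 1) / (2 * INR k + 3) <= 3).
  { split. apply Rdiv_le_0_compat; lra. apply (Rmult_le_reg_r (2 * INR k + 3)). lra.
    unfold Rdiv. rewrite Rmult_assoc, Rinv_l, Rmult_1_r by lra. lra. }
  nra.
- apply is_lim_seq_const.
- replace (Finite 0) with (Rbar_mult 3 0). apply is_lim_seq_scal_l. apply dd_to0. simpl. f_equal; ring.
Qed.

Definition Sp n M := sum_f_R0 (fun m => aa (m + n) / (INR m + 1)) M.
Definition GG n := 3 * hm (S n) / ((2 * INR n + 1) * cc n).

Lemma Sp0 M : Sp 0 M = 3 * (1 - dd (S M)).
Proof. unfold Sp. induction M.
- simpl sum_f_R0. rewrite aa_tel. unfold dd. simpl. field.
- rewrite tech5, IHM. rewrite Nat.add_0_r, aa_tel. ring.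
Qed.

Lemma Spstep n M : (INR n + 1) * Sp n M - (INR n + 3/2) * Sp (S n) M = aa (S (M + n)) - aa n.
Proof. unfold Sp. induction M.
- exact (aa_step n 0).
- rewrite !tech5. 
  transitivity (((INR n + 1) * sum_f_R0 (fun m : nat => aa (m + n) / (INR m + 1)) M -
    (INR n + 3 / 2) * sum_f_R0 (fun m : nat => aa (m + S n) / (INR m + 1)) M) +
    ((INR n + 1) * (aa (S M + n) / (INR (S M) + 1)) - (INR n + 3/2) * (aa (S M + S n) / (INR (S M) + 1)))).
  field. pose proof (pos_INR (S M)). lra.
  rewrite IHM, aa_step. simpl. ring.
Qed.

Lemma lim_lin u v (l1 l2 a b c : R) : is_lim_seq u l1 -> is_lim_seq v l2 ->
  is_lim_seq (fun M => a * u M + b * v M + c) (a * l1 + b * l2 + c).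
Proof. intros Hu Hv.
apply is_lim_seq_plus'. apply is_lim_seq_plus'.
exact (is_lim_seq_scal_l u a l1 Hu). exact (is_lim_seq_scal_l v b l2 Hv).
apply is_lim_seq_const. Qed.

Lemma inner n : is_lim_seq (Sp n) (GG n).
Proof. induction n.
- assert (E := lim_lin (fun _ => 0) (fun M => dd (S M)) 0 0 0 (-3) 3 (is_lim_seq_const 0)).
  assert (Hd : is_lim_seq (fun M => dd (S M)) 0). { apply (is_lim_seq_incr_1 dd 0). apply dd_to0. }
  specialize (E Hd).
  replace (GG 0) with (0 * 0 + -3 * 0 + 3). 2: { unfold GG; simpl; field. }
  eapply is_lim_seq_ext. 2: exact E. intros M. simpl. rewrite Sp0. ring.
- assert (Ha : is_lim_seq (fun M => aa (S (M + n))) 0).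
  { pose proof aa_to0 as A0. apply (is_lim_seq_incr_n aa (S n) 0) in A0. eapply is_lim_seq_ext. 2: exact A0.
    intros M. cbv beta. rewrite <- plus_n_Sm. reflexivity. }
  pose proof (pos_INR n).
  assert (E := lim_lin (Sp n) (fun M => aa (S (M + n))) (GG n) 0 ((INR n + 1) / (INR n + 3/2)) (- / (INR n + 3/2)) (aa n / (INR n + 3/2)) IHn Ha).
  replace (GG (S n)) with ((INR n + 1) / (INR n + 3 / 2) * GG n + - / (INR n + 3 / 2) * 0 + aa n / (INR n + 3 / 2)).
  + eapply is_lim_seq_ext. 2: exact E. intros M. simpl.
    pose proof (Spstep n M). apply (Rmult_eq_reg_r (INR n + 3/2)). 2: lra.
    transitivity ((INR n + 1) * Sp n M - aa (S (M + n)) + aa n). field. lra. lra.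
  + unfold GG, aa. rewrite !hm_S, cc_S, !S_INR. pose proof (cc_pos n). field. repeat split; lra.
Qed.

Lemma sum_rev (h : nat -> R) N : sum_f_R0 (fun i => h (N - i)%nat) N = sum_f_R0 h N.
Proof. revert h. induction N; intros h. reflexivity.
rewrite decomp_sum by lia. simpl pred.
replace (S N - 0)%nat with (S N) by lia.
rewrite (sum_eq (fun i => h (S N - S i)%nat) (fun i => h (N - i)%nat)).
2: intros i Hi; f_equal; lia.
rewrite IHN. rewrite tech5. ring. Qed.

Definition Tri (f : nat -> nat -> R) K := sum_f_R0 (fun k => sum_f_R0 (fun m => f m (k - m)%nat) k) K.
Definition Col (f : nat -> nat -> R) K := sum_f_R0 (fun n => sum_f_R0 (fun m => f m n) (K - n)%nat) K.

Lemma Tri_Col f K : Tri f K = Col f K.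
Proof. unfold Tri, Col. induction K. reflexivity.
rewrite (tech5 (fun k => sum_f_R0 (fun m => f m (k - m)%nat) k) K), IHK.
rewrite (tech5 (fun n => sum_f_R0 (fun m => f m n) (S K - n)%nat) K).
replace (S K - S K)%nat with 0%nat by lia. simpl (sum_f_R0 (fun m => f m (S K)) 0).
rewrite (sum_eq (fun n => sum_f_R0 (fun m => f m n) (S K - n)) (fun n => sum_f_R0 (fun m => f m n) (K - n) + f (S K - n)%nat n)).
2: { intros i Hi. replace (S K - i)%nat with (S (K - i)) by lia. rewrite tech5. f_equal. }
rewrite sum_plus.
rewrite <- (sum_rev (fun m => f m (S K - m)%nat) (S K)).
rewrite (tech5 (fun i => f (S K - i)%nat (S K - (S K - i))%nat) K). replace (S K - S K)%nat with 0%nat by lia.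
rewrite (sum_eq (fun i => f (S K - i)%nat (S K - (S K - i))%nat) (fun n => f (S K - n)%nat n)).
2: { intros i Hi. f_equal. lia. }
replace (S K - 0)%nat with (S K) by lia. ring. Qed.

Lemma sum_nonneg (a : nat -> R) N : (forall n, 0 <= a n) -> 0 <= sum_f_R0 a N.
Proof. intros H. apply cond_pos_sum. auto. Qed.

Lemma sum_mono (a : nat -> R) M N : (forall n, 0 <= a n) -> (M <= N)%nat -> sum_f_R0 a M <= sum_f_R0 a N.
Proof. intros H HMN. induction HMN. lra. rewrite tech5. pose proof (H (S m)). lra. Qed.

Lemma unif_M (t : nat -> nat -> R) (g : nat -> R) (d : R) N :
  0 < d -> (forall n, infinite_sum (fun m => t m n) (g n)) ->
  exists M, forall n M', (n <= N)%nat -> (M <= M')%nat -> g n - d < sum_f_R0 (fun m => t m n) M'.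
Proof. intros Hd Hs. induction N.
- destruct (Hs 0%nat d Hd) as [M HM]. exists M. intros n M' Hn HM'.
  replace n with 0%nat by lia. specialize (HM M' HM'). unfold Rdist in HM. apply Rabs_def2 in HM. lra.
- destruct IHN as [M1 H1]. destruct (Hs (S N) d Hd) as [M2 H2].
  exists (Nat.max M1 M2). intros n M' Hn HM'.
  destruct (Nat.eq_dec n (S N)) as [->|Hne].
  + specialize (H2 M' ltac:(lia)). unfold Rdist in H2. apply Rabs_def2 in H2. lra.
  + apply H1; lia.
Qed.

Lemma sum_sub_const (g : nat -> R) d N : sum_f_R0 (fun n => g n - d) N = sum_f_R0 g N - (INR N + 1) * d.
Proof. induction N. simpl. ring. rewrite !tech5, IHN, S_INR. ring. Qed.

Lemma diag_fubini (t : nat -> nat -> R) (g : nat -> R) L :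
  (forall m n, 0 <= t m n) -> (forall n, infinite_sum (fun m => t m n) (g n)) -> infinite_sum g L ->
  infinite_sum (fun k => sum_f_R0 (fun m => t m (k - m)%nat) k) L.
Proof. intros Ht Hs HL.
assert (Hg : forall n, 0 <= g n).
{ intros n. pose proof (sum_incr (fun m => t m n) 0 (g n) (Hs n) (fun m => Ht m n)). simpl in H.
  pose proof (Ht 0%nat n). lra. }
assert (Up : forall K, Tri t K <= L).
{ intros K. rewrite Tri_Col. unfold Col. apply Rle_trans with (sum_f_R0 g K).
  apply sum_Rle. intros n _. apply sum_incr. apply Hs. intros; apply Ht.
  apply sum_incr; auto. }
intros eps He.
destruct (HL (eps/2) ltac:(lra)) as [N HN]. specialize (HN N (le_n N)). unfold Rdist in HN.
apply Rabs_def2 in HN.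
set (d := eps / 2 / (INR N + 1)).
assert (Hd : 0 < d). { unfold d. pose proof (pos_INR N). apply Rdiv_lt_0_compat; lra. }
destruct (unif_M t g d N Hd Hs) as [M HM].
exists (N + M)%nat. intros K HK.
unfold Rdist. fold (Tri t K).
assert (Lo : sum_f_R0 g N - (INR N + 1) * d <= Tri t K).
{ rewrite Tri_Col. unfold Col. rewrite <- sum_sub_const.
  apply Rle_trans with (sum_f_R0 (fun n => sum_f_R0 (fun m => t m n) (K - n)) N).
  - apply sum_Rle. intros n Hn. left. apply HM; lia.
  - apply sum_mono. intros n. apply sum_nonneg. intros; apply Ht. lia. }
assert (Ed : (INR N + 1) * d = eps / 2). { unfold d. pose proof (pos_INR N). field. lra. }
pose proof (Up K). rewrite Rabs_left1; lra.
Qed.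

Lemma term_nonneg m n : 0 <= kdf_term 1 1 m n.
Proof. rewrite term_eq. pose proof (pos_INR m). pose proof (pos_INR (m+n)). pose proof (dd_pos (m+n)).
apply Rmult_le_pos. apply pow2_ge_0. apply Rdiv_le_0_compat. 2: lra.
rewrite aa_dd. apply Rmult_le_pos. apply Rdiv_le_0_compat; lra. lra. Qed.

Lemma inner_sum n : infinite_sum (fun m => kdf_term 1 1 m n) (cc n ^ 2 * GG n).
Proof.
assert (Hl : is_lim_seq (fun M => cc n ^ 2 * Sp n M) (cc n ^ 2 * GG n)).
{ exact (is_lim_seq_scal_l (Sp n) (cc n ^ 2) (GG n) (inner n)). }
apply is_lim_seq_Reals in Hl.
intros eps He. destruct (Hl eps He) as [N HN]. exists N. intros M HM.
replace (sum_f_R0 (fun m => kdf_term 1 1 m n) M) with (cc n ^ 2 * Sp n M). apply HN; auto.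
unfold Sp. rewrite scal_sum. apply sum_eq. intros i _. rewrite term_eq. ring.
Qed.

Lemma outer_sum : infinite_sum (fun n => cc n ^ 2 * GG n) (3 * PI * ln 2).
Proof. intros eps He. destruct (main_sum (eps/3) ltac:(lra)) as [N HN]. exists N. intros n Hn.
specialize (HN n Hn). unfold Rdist in *.
replace (sum_f_R0 (fun n => cc n ^ 2 * GG n) n) with (3 * sum_f_R0 bb n).
- replace (3 * sum_f_R0 bb n - 3 * PI * ln 2) with (3 * (sum_f_R0 bb n - PI * ln 2)) by ring.
  rewrite Rabs_mult, Rabs_right by lra. lra.
- rewrite scal_sum. apply sum_eq. intros i _. unfold GG, bb. pose proof (cc_pos i). pose proof (pos_INR i).
  field. lra.
Qed.

Theorem mainTheorem5 :
  infinite_sum (kdf_diag 1 1) (3 * PI * ln 2).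
Proof.
unfold kdf_diag.
apply (diag_fubini (kdf_term 1 1) (fun n => cc n ^ 2 * GG n)).
- apply term_nonneg.
- apply inner_sum.
- apply outer_sum.
Qed.
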